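(* Let $m$ be a positive integer and let $a,d_1,d_2\in\mathbb{Z}/m\mathbb{Z}$ with $\gcd(d_1,m)=\gcd(d_2,m)$, and let $n$ be a positive integer with $n\equiv 0$ or $n\equiv -1\pmod{m/\gcd(d_1,m)}$. Then the arithmetic triangle $\nabla=\mathrm{AT}(a,d_1,d_2,n)$ satisfies $\mathfrak{m}_\nabla(x+\gcd(d_2-d_1,m))=\mathfrak{m}_\nabla(x)$ for all $x\in\mathbb{Z}/m\mathbb{Z}$.
   Context: For $d\in\mathbb{Z}/m\mathbb{Z}$, $\gcd(d,m)$ is the gcd of $m$ with any integer representative of $d$. The arithmetic triangle $\mathrm{AT}(a,d_1,d_2,n)$ is the family $(a+id_2+jd_1)_{(i,j)\in\mathbb{N}^2,\,i+j<n}$ of elements of $\mathbb{Z}/m\mathbb{Z}$, regarded as a multiset; $\mathfrak{m}_\nabla(x)$ is the number of $(i,j)$ with $i+j<n$ and $a+id_2+jd_1=x$. *)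

(* Defs.v *)
From mathcomp Require Import all_boot all_order all_algebra.
Set Implicit Arguments. Unset Strict Implicit. Unset Printing Implicit Defensive.
Import Order.TTheory GRing.Theory Num.Theory.
Local Open Scope ring_scope.

(* Elements of Z/mZ are represented by integers; equality in Z/mZ is
   congruence modulo m.  gcd(d, m) for d in Z/mZ is gcdz d m (independent of
   the representative). *)

Definition at_mult (m : nat) (a d1 d2 : int) (n : nat) (x : int) : nat :=
  #|[set p : 'I_n * 'I_n |
      ((p.1 : nat) + (p.2 : nat) < n)%N &&
      ((a + (p.1 : nat)%:Z * d2 + (p.2 : nat)%:Z * d1 == x %[mod m%:Z])%Z)]|.

(* Main.v *)
Require Import Defs.
From mathcomp Require Import all_boot all_order all_algebra.
Import Order.TTheory GRing.Theory Num.Theory.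
From mathcomp Require Import ring zify.
Local Open Scope ring_scope.

Lemma modW (M X Y c : int) : X - Y = c * M -> (X == Y %[mod M])%Z.
Proof. by move=> H; rewrite eqz_mod_dvd H dvdz_mull // dvdzz. Qed.

Definition P (m : nat) (d : int) (N : nat) (z : int) : nat :=
  (\sum_(0 <= k < N) ((k%:Z * d == z %[mod m%:Z])%Z : nat))%N.

Lemma period_one (m : nat) (d z : int) : (0 < m)%N ->
  P m d (m %/ gcdn `|d| m) z = ((gcdz d m %| z)%Z : nat).
Proof.
move=> m0.
set G := gcdn `|d| m.
have G0 : (0 < G)%N by rewrite gcdn_gt0 m0 orbT.
set q := (m %/ G)%N.
have mE : m = (q * G)%N by rewrite divnK // dvdn_gcdr.
have Gd : ((G%:Z) %| d)%Z := dvdz_gcdl d m.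
have GZ0 : G%:Z != 0 by rewrite eqz_nat -lt0n.
case/dvdzP: Gd => d' dE.
have gE : gcdz d m%:Z = G%:Z by [].
rewrite /P gE; case: (boolP (G%:Z %| z)%Z) => Hz /=.
  case/dvdzP: Hz => z' zE.
  have [u [v uvE]] := Bezoutz d m; rewrite gE in uvE.
  have uv1 : u * d' + v * q%:Z = 1.
    apply: (mulIf GZ0); rewrite mul1r -[RHS]uvE dE mE PoszM /=; ring.
  have q0 : (0 < q)%N by rewrite mE muln_gt0 G0 andbT in m0.
  have q0' : 0 < q%:Z by [].
  set k0 := ((u * z') %% q%:Z)%Z.
  have k0ge : 0 <= k0 by rewrite modz_ge0 // gt_eqF.
  have k0lt : k0 < q%:Z by rewrite ltz_pmod.
  have key : forall k : nat, (k < q)%N ->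
     ((k%:Z * d == z %[mod m%:Z])%Z = (k%:Z == k0)).
    move=> k kq; apply/idP/idP.
      rewrite eqz_mod_dvd => /dvdzP [w wE].
      have E2 : (k%:Z - u * z') * G%:Z = (u * w + k%:Z * v) * q%:Z * G%:Z.
        have -> : (u * w + k%:Z * v) * q%:Z * G%:Z = u * (w * m%:Z) + k%:Z * v * m%:Z.
          by rewrite mE PoszM; ring.
        rewrite -wE zE dE -[in LHS](mul1r (k%:Z)) -uv1 /= mE PoszM; ring.
      have E3 := mulIf GZ0 E2.
      have -> : k%:Z = (k%:Z %% q%:Z)%Z by rewrite modz_small //; apply/andP; split => //; rewrite ltz_nat.
      rewrite /k0; apply/eqP; apply/eqP.
      rewrite -(addrNK (u * z') k%:Z) E3 modzMDl //.
    move/eqP => ->; apply: (@modW _ _ _ (- v * z' - ((u * z') %/ q%:Z)%Z * d')).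
    rewrite /k0 zE dE mE PoszM /=.
    have -> : ((u * z') %% q%:Z)%Z = u * z' - ((u * z') %/ q%:Z)%Z * q%:Z.
      by rewrite {2}(divz_eq (u * z') q%:Z); ring.
    set t := ((u * z') %/ q%:Z)%Z.
    apply/eqP; rewrite -subr_eq0.
    have -> : (u * z' - t * q%:Z) * (d' * G%:Z) - z' * G%:Z -
      (- v * z' - t * d') * (q%:Z * G%:Z) = z' * G%:Z * (u * d' + v * q%:Z - 1) by ring.
    by rewrite uv1 subrr mulr0.
  rewrite (eq_big_nat _ _ (fun k hk => congr1 nat_of_bool (key k (andP hk).2))).
  have k0E : k0 = `|k0|%N%:Z by rewrite gez0_abs.
  have k0q : (`|k0| < q)%N by rewrite -ltz_nat -k0E.
  rewrite big_mkord k0E (bigD1 (Ordinal k0q)) //= eqxx big1 // => i /eqP ni.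
  apply/eqP; rewrite eqb0 eqz_nat; apply/eqP => iE; apply: ni; exact: val_inj.
rewrite big1 // => k _; apply/eqP; rewrite eqb0; apply/negP; rewrite eqz_mod_dvd => H.
apply/negP: Hz; apply/negPn.
have Gm : (G%:Z %| m%:Z)%Z := dvdz_gcdr d m.
have H1 : (G%:Z %| k%:Z * d - z)%Z := dvdz_trans Gm H.
have H2 : (G%:Z %| k%:Z * d)%Z by rewrite dE mulrA dvdz_mull // dvdzz.
have -> : z = k%:Z * d - (k%:Z * d - z) by ring.
by rewrite rpredB.
Qed.

Lemma period_mul (m : nat) (d z : int) (t : nat) : (0 < m)%N ->
  P m d (t * (m %/ gcdn `|d| m)) z = (t * P m d (m %/ gcdn `|d| m) z)%N.
Proof.
move=> m0.
set G := gcdn `|d| m.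
set q := (m %/ G)%N.
have mE : m = (q * G)%N by rewrite divnK // dvdn_gcdr.
have Gd : ((G%:Z) %| d)%Z := dvdz_gcdl d m.
case/dvdzP: Gd => d' dE.
elim: t => [|t IH]; first by rewrite /P mul0n big_geq.
rewrite mulSnr {1}/P (big_cat_nat _ (n:=(t*q)%N)) //= ?leq_addr // -/(P m d (t * q) z) IH.
rewrite mulSnr; congr (_ + _)%N.
rewrite -{1}[(t*q)%N]add0n big_addn addKn /P; apply: eq_bigr => k _.
have -> : ((k + t * q)%N%:Z * d = (t%:Z * d') * m%:Z + k%:Z * d).
  by rewrite dE mE !PoszD !PoszM; ring.
by rewrite modzMDl.
Qed.

Lemma Pfull (m : nat) (d z : int) (t : nat) : (0 < m)%N ->
  P m d (t * (m %/ gcdn `|d| m)) z = (t * ((gcdz d m %| z)%Z : nat))%N.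
Proof. by move=> m0; rewrite period_mul // period_one. Qed.

Definition C (m : nat) (d : int) (N : nat) (z : int) : nat :=
  (\sum_(0 <= k < N) ((k.+1%:Z * d == z %[mod m%:Z])%Z : nat))%N.

Lemma C_P m d N z : (C m d N z + ((0 == z %[mod m%:Z])%Z : nat))%N = P m d N.+1 z.
Proof. by rewrite /C /P big_nat_recl // mul0r addnC. Qed.

Lemma P_S m d N z : P m d N.+1 z = (P m d N z + ((N%:Z * d == z %[mod m%:Z])%Z : nat))%N.
Proof. by rewrite /P big_nat_recr. Qed.

Lemma mul_q0 (m : nat) (d : int) (t : nat) :
  (((t * (m %/ gcdn `|d| m))%N%:Z * d) %% m%:Z)%Z = 0.
Proof.
set G := gcdn `|d| m.
set q := (m %/ G)%N.
have mE : m = (q * G)%N by rewrite divnK // dvdn_gcdr.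
have Gd : ((G%:Z) %| d)%Z := dvdz_gcdl d m.
case/dvdzP: Gd => d' dE.
apply/dvdz_mod0P; rewrite dE mE !PoszM.
have -> : t%:Z * q%:Z * (d' * G%:Z) = (t%:Z * d') * (q%:Z * G%:Z) by ring.
by rewrite dvdz_mull // dvdzz.
Qed.

Lemma C_eq (m : nat) (d1 d2 : int) (n : nat) (z : int) : (0 < m)%N ->
  gcdz d1 m%:Z = gcdz d2 m%:Z ->
  (let q := (m %/ `|gcdz d1 m%:Z|)%N in
   (n %% q == 0)%N || ((n + 1) %% q == 0)%N) ->
  C m d1 n z = C m d2 n z.
Proof.
move=> m0 Hg /=.
have Hg' : gcdn `|d1| m = gcdn `|d2| m by case: Hg.
set q := (m %/ gcdn `|d1| m)%N.
have q2 : q = (m %/ gcdn `|d2| m)%N by rewrite /q Hg'.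
have PF : forall d, q = (m %/ gcdn `|d| m)%N -> forall t,
    P m d (t * q) z = (t * ((gcdz d m %| z)%Z : nat))%N.
  by move=> d -> t; exact: Pfull.
case/orP => /eqP Hn.
  have nE : n = (n %/ q * q)%N by rewrite divnK //; apply/eqP.
  apply/(@addIn ((0 == z %[mod m%:Z])%Z : nat)).
  rewrite !C_P !P_S.
  have mod0 : forall d : int, q = (m %/ gcdn `|d| m)%N ->
    ((n%:Z * d == z %[mod m%:Z])%Z) = (0 == z %[mod m%:Z])%Z.
    by move=> d qd; rewrite nE qd mul_q0 mod0z.
  rewrite (mod0 d1) // (mod0 d2) //; congr (_ + _)%N.
  by rewrite nE !PF // Hg.
have nE : n.+1 = ((n + 1) %/ q * q)%N by rewrite addn1 divnK //; apply/eqP; rewrite -addn1.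
apply/(@addIn ((0 == z %[mod m%:Z])%Z : nat)).
by rewrite !C_P nE !PF // Hg.
Qed.

Definition H (m : nat) (a d1 d2 y u v : int) : nat :=
  ((a + u * d2 + v * d1 == y %[mod m%:Z])%Z : nat).

Definition F m a d1 d2 n y : nat :=
  (\sum_(0 <= i < n) \sum_(0 <= j < n - i) H m a d1 d2 y i%:Z j%:Z)%N.

Lemma at_mult_F m a d1 d2 n y : at_mult m a d1 d2 n y = F m a d1 d2 n y.
Proof.
rewrite /at_mult /F -sum1_card big_mkcond /= big_mkord.
have -> : (\sum_(i < n) \sum_(0 <= j < n - i) H m a d1 d2 y i j =
   \sum_(i < n) \sum_(j < n) (if (j < n - i)%N then H m a d1 d2 y i j else 0%N))%N.
  apply: eq_bigr => i _; rewrite (big_nat_widen _ _ _ _ _ (leq_subr i n)) big_mkcond big_mkord /=.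
  by [].
rewrite pair_big /=; apply: eq_bigr => p _.
rewrite inE ltn_subRL /H; case: (_ + _ < n)%N => //.
Qed.

Lemma Hshift m a d1 d2 y u v :
  H m a d1 d2 (y + (d2 - d1)) u v = H m a d1 d2 y (u - 1) (v + 1).
Proof.
rewrite /H; congr nat_of_bool; rewrite !eqz_mod_dvd; congr (_ %| _)%Z; ring.
Qed.

Lemma tele m a d1 d2 n' y :
  (F m a d1 d2 n'.+1 (y + (d2 - d1)) + \sum_(0 <= i < n'.+1) H m a d1 d2 y i%:Z 0)%N =
  (F m a d1 d2 n'.+1 y + \sum_(0 <= j < n'.+1) H m a d1 d2 y (-1) (j.+1)%:Z)%N.
Proof.
set B := (\sum_(0 <= i < n') \sum_(0 <= j < n' - i) H m a d1 d2 y i%:Z (j.+1)%:Z)%N.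
have E1 : F m a d1 d2 n'.+1 (y + (d2 - d1)) =
   (\sum_(0 <= j < n'.+1) H m a d1 d2 y (-1) (j.+1)%:Z + B)%N.
  rewrite /F big_nat_recl // subn0; congr (_ + _)%N.
    by apply: eq_bigr => j _; rewrite Hshift sub0r intS addrC.
  apply: eq_bigr => i _; rewrite subSS; apply: eq_bigr => j _.
  rewrite Hshift; congr H; first by rewrite intS; ring.
  by rewrite intS addrC.
have E2 : F m a d1 d2 n'.+1 y =
   (\sum_(0 <= i < n'.+1) H m a d1 d2 y i%:Z 0 + B)%N.
  rewrite /F.
  rewrite (eq_big_nat _ _ (F2 := fun i => H m a d1 d2 y i%:Z 0 +
         \sum_(0 <= j < n' - i) H m a d1 d2 y i%:Z (j.+1)%:Z)%N); last first.
    by move=> i /andP [_ hi]; rewrite subSn // big_nat_recl.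
  rewrite big_split /=; congr (_ + _)%N.
  by rewrite big_nat_recr //= subnn [X in (_ + X)%N]big_geq // addn0.
rewrite E1 E2; lia.
Qed.

Theorem theorem13 (m : nat) (a d1 d2 : int) (n : nat) :
  (0 < m)%N -> gcdz d1 m%:Z = gcdz d2 m%:Z -> (0 < n)%N ->
  (let q := (m %/ `|gcdz d1 m%:Z|)%N in
   (n %% q == 0)%N || ((n + 1) %% q == 0)%N) ->
  forall x : int,
    at_mult m a d1 d2 n (x + gcdz (d2 - d1) m%:Z) = at_mult m a d1 d2 n x.
Proof.
move=> m0 Hg n0 Hq x.
have inv : forall y, at_mult m a d1 d2 n (y + (d2 - d1)) = at_mult m a d1 d2 n y.
  move=> y; rewrite !at_mult_F; case: n n0 Hq => // n' _ Hq.
  apply/(@addIn (\sum_(0 <= i < n'.+1) H m a d1 d2 y i%:Z 0)%N).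
  rewrite tele; congr (_ + _)%N.
  have CE := @C_eq m d1 d2 n'.+1 (y - a + d2) m0 Hg Hq.
  transitivity (C m d1 n'.+1 (y - a + d2)).
    rewrite /C; apply: eq_bigr => j _; rewrite /H; congr nat_of_bool.
    by rewrite !eqz_mod_dvd; congr (_ %| _)%Z; ring.
  rewrite CE /C; apply: eq_bigr => j _; rewrite /H; congr nat_of_bool.
  by rewrite !eqz_mod_dvd; congr (_ %| _)%Z; rewrite intS; ring.
have modinv : forall y y', (y %% m%:Z)%Z = (y' %% m%:Z)%Z ->
    at_mult m a d1 d2 n y = at_mult m a d1 d2 n y'.
  by move=> y y' E; rewrite /at_mult E.
have iter : forall k : nat,
    at_mult m a d1 d2 n (x + k%:Z * (d2 - d1)) = at_mult m a d1 d2 n x.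
  elim => [|k IH]; first by rewrite mul0r addr0.
  rewrite -[RHS]IH -[RHS]inv; congr at_mult; rewrite intS; ring.
have [u [v uvE]] := Bezoutz (d2 - d1) m.
have mz : m%:Z != 0 by rewrite eqz_nat -lt0n.
have kE : `|(u %% m%:Z)%Z|%N%:Z = (u %% m%:Z)%Z by rewrite gez0_abs // modz_ge0.
rewrite -(iter `|(u %% m%:Z)%Z|%N); apply: modinv; apply/eqP.
apply: (@modW _ _ _ ((u %/ m%:Z)%Z * (d2 - d1) + v)).
rewrite kE -uvE {1}(divz_eq u m%:Z); ring.
Qed.
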